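(* For every $r>0$, every $\theta,\varphi\in[0,2\pi]$ and every positive integer $L$, $$\frac{12}{L}\sum_{j=0}^{L-1}\big|1-re^{i(j\theta+\varphi)}\big|^2\ \ge\ \big|1-re^{i\varphi}\big|^2.$$ *)

(* Defs.v *)
From Stdlib Require Import Reals.
Open Scope R_scope.

Definition Cx : Type := (R * R)%type.

Definition Csub (z w : Cx) : Cx := (fst z - fst w, snd z - snd w).
Definition Cscale (r : R) (z : Cx) : Cx := (r * fst z, r * snd z).
Definition Cone : Cx := (1, 0).
Definition Cexpi (t : R) : Cx := (cos t, sin t).
Definition Cnorm2 (z : Cx) : R := fst z ^ 2 + snd z ^ 2.

Fixpoint sum_lt (L : nat) (f : nat -> R) : R :=
  match L with
  | O => 0
  | S n => sum_lt n f + f n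
  end.

(* Main.v *)
Require Import Defs.
From Stdlib Require Import Reals Lra Lia Psatz.
Open Scope R_scope.

Lemma sum_lt_ext n f g : (forall j, (j < n)%nat -> f j = g j) -> sum_lt n f = sum_lt n g.
Proof.
  induction n as [|n IH]; intros H; simpl; [reflexivity|].
  rewrite IH by (intros; apply H; lia). rewrite (H n) by lia. reflexivity.
Qed.

Lemma sum_lt_le n f g : (forall j, (j < n)%nat -> f j <= g j) -> sum_lt n f <= sum_lt n g.
Proof.
  induction n as [|n IH]; intros H; simpl; [lra|].
  assert (sum_lt n f <= sum_lt n g) by (apply IH; intros; apply H; lia).
  assert (f n <= g n) by (apply H; lia). lra.
Qed.

Lemma sum_lt_plus n f g : sum_lt n (fun j => f j + g j) = sum_lt n f + sum_lt n g.
Proof. induction n; simpl; [lra|]. rewrite IHn. lra. Qed.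

Lemma sum_lt_scal n c f : sum_lt n (fun j => c * f j) = c * sum_lt n f.
Proof. induction n; simpl; [lra|]. rewrite IHn. lra. Qed.

Lemma sum_lt_const n c : sum_lt n (fun _ => c) = INR n * c.
Proof. induction n; simpl sum_lt; [simpl; lra|]. rewrite IHn, S_INR. lra. Qed.

Lemma sum_lt_nonneg n f : (forall j, 0 <= f j) -> 0 <= sum_lt n f.
Proof. intros H; induction n; simpl; [lra|]. specialize (H n). lra. Qed.

Lemma sum_lt_shift n g : sum_lt (S n) g = g 0%nat + sum_lt n (fun j => g (S j)).
Proof. induction n; simpl in *; [lra|]. rewrite IHn. lra. Qed.

Lemma sum_lt_rev n g : sum_lt (S n) (fun j => g (n - j)%nat) = sum_lt (S n) g.
Proof.
  revert g; induction n as [|n IH]; intros g; [simpl; lra|].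
  change (sum_lt (S (S n)) (fun j => g (S n - j)%nat))
    with (sum_lt (S n) (fun j => g (S n - j)%nat) + g (S n - S n)%nat).
  rewrite (sum_lt_ext (S n) (fun j => g (S n - j)%nat) (fun j => (fun i => g (S i)) (n - j)%nat)).
  2:{ intros j Hj. f_equal. lia. }
  rewrite (IH (fun i => g (S i))). rewrite (sum_lt_shift (S n) g). replace (S n - S n)%nat with 0%nat by lia. lra.
Qed.

Section Key.
Variable g : nat -> R.
Variable s2 : R.
Hypothesis gpos : forall j, 0 <= g j.
Hypothesis s2pos : 0 <= s2.
Hypothesis tri : forall n j, (j <= n)%nat -> s2 <= 3 * (g j + g (n - j)%nat + g n).

Lemma diag n : INR (S n) * s2 <= 3 * (2 * sum_lt (S n) g + INR (S n) * g n).
Proof.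
  rewrite <- sum_lt_const.
  eapply Rle_trans.
  { apply (sum_lt_le (S n) (fun _ => s2) (fun j => 3 * (g j + g (n - j)%nat + g n))).
    intros j Hj. apply tri. lia. }
  rewrite sum_lt_scal, !sum_lt_plus, sum_lt_rev, !sum_lt_const. lra.
Qed.

Definition P L := sum_lt L (fun n => 2 * sum_lt (S n) g + INR (S n) * g n).

Lemma PA L : P L <= (2 * INR L + 1) * sum_lt L g.
Proof.
  induction L as [|L IH]; unfold P in *; [simpl; lra|].
  change (sum_lt (S L) ?F) with (sum_lt L F + F L).
  cbv beta.
  change (sum_lt (S L) g) with (sum_lt L g + g L).
  rewrite S_INR. pose proof (gpos L). pose proof (pos_INR L).
  pose proof (sum_lt_nonneg L g gpos). nra.
Qed.

Lemma PB L : INR L * (INR L + 1) / 6 * s2 <= P L.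
Proof.
  induction L as [|L IH]; unfold P in *; [simpl; lra|].
  change (sum_lt (S L) ?F) with (sum_lt L F + F L).
  cbv beta.
  pose proof (diag L). rewrite S_INR in *. lra.
Qed.

Lemma key L : INR L * s2 <= 12 * sum_lt L g.
Proof.
  pose proof (PA L). pose proof (PB L). pose proof (pos_INR L).
  pose proof (sum_lt_nonneg L g gpos).
  assert (H3 : INR L * (2 * INR L + 1) * s2 <= 12 * (2 * INR L + 1) * sum_lt L g) by nra.
  assert (0 < 2 * INR L + 1) by lra.
  apply Rmult_le_reg_r with (2 * INR L + 1); [lra|]. nra.
Qed.
End Key.

Lemma abs_mul_le x y : Rabs y <= 1 -> Rabs (x * y) <= Rabs x.
Proof. intros H. rewrite Rabs_mult. pose proof (Rabs_pos x). nra. Qed.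

Lemma abs_cos x : Rabs (cos x) <= 1.
Proof. apply Rabs_le. pose proof (COS_bound x). lra. Qed.

Lemma sin_add_le a b : Rabs (sin (a + b)) <= Rabs (sin a) + Rabs (sin b).
Proof.
  rewrite sin_plus. eapply Rle_trans; [apply Rabs_triang|].
  pose proof (abs_mul_le (sin a) (cos b) (abs_cos b)).
  rewrite (Rmult_comm (cos a)).
  pose proof (abs_mul_le (sin b) (cos a) (abs_cos a)). lra.
Qed.

Lemma sin3 a b c : Rabs (sin (a + b - c)) <= Rabs (sin a) + Rabs (sin b) + Rabs (sin c).
Proof.
  rewrite sin_minus. unfold Rminus. eapply Rle_trans; [apply Rabs_triang|].
  rewrite Rabs_Ropp.
  pose proof (abs_mul_le (sin (a+b)) (cos c) (abs_cos c)).
  rewrite (Rmult_comm (cos (a+b))).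
  pose proof (abs_mul_le (sin c) (cos (a+b)) (abs_cos (a+b))).
  pose proof (sin_add_le a b). lra.
Qed.

Lemma sin3sq a b c : sin (a + b - c) ^ 2 <= 3 * (sin a ^ 2 + sin b ^ 2 + sin c ^ 2).
Proof.
  pose proof (sin3 a b c).
  pose proof (Rabs_pos (sin a)). pose proof (Rabs_pos (sin b)). pose proof (Rabs_pos (sin c)).
  pose proof (Rabs_pos (sin (a+b-c))).
  rewrite <- (pow2_abs (sin (a+b-c))), <- (pow2_abs (sin a)), <- (pow2_abs (sin b)), <- (pow2_abs (sin c)).
  set (x := Rabs (sin (a+b-c))) in *. set (p := Rabs (sin a)) in *.
  set (q := Rabs (sin b)) in *. set (w := Rabs (sin c)) in *.
  assert (x ^ 2 <= (p + q + w) ^ 2) by (apply pow_incr; lra).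
  pose proof (pow2_ge_0 (p - q)). pose proof (pow2_ge_0 (q - w)). pose proof (pow2_ge_0 (p - w)).
  nra.
Qed.

Lemma term_eq r x : Cnorm2 (Csub Cone (Cscale r (Cexpi x))) = (1 - r)^2 + 4 * r * sin (x/2) ^ 2.
Proof.
  unfold Cnorm2, Csub, Cone, Cscale, Cexpi; cbn [fst snd].
  assert (Hc : cos x = 1 - 2 * sin (x/2) ^ 2).
  { replace x with (2 * (x/2)) at 1 by field. rewrite cos_2a_sin. ring. }
  assert (Hs : sin x ^ 2 = 1 - cos x ^ 2).
  { pose proof (sin2_cos2 x). unfold Rsqr in H. lra. }
  replace ((0 - r * sin x) ^ 2) with (r^2 * sin x ^ 2) by ring.
  rewrite Hs, Hc. ring.
Qed.

Theorem proposition6p1 :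
  forall (r theta phi : R) (L : nat),
    0 < r ->
    0 <= theta <= 2 * PI ->
    0 <= phi <= 2 * PI ->
    (0 < L)%nat ->
    (12 / INR L) *
      sum_lt L (fun j => Cnorm2 (Csub Cone (Cscale r (Cexpi (INR j * theta + phi)))))
    >= Cnorm2 (Csub Cone (Cscale r (Cexpi phi))).
Proof.
  intros r theta phi L Hr _ _ HL.
  set (g := fun j : nat => sin ((INR j * theta + phi) / 2) ^ 2).
  set (s2 := sin (phi / 2) ^ 2).
  assert (Hk : INR L * s2 <= 12 * sum_lt L g).
  { apply key.
    - intros j. unfold g. apply pow2_ge_0.
    - apply pow2_ge_0.
    - intros n j Hj. unfold g, s2.
      replace (phi / 2) with ((INR j * theta + phi) / 2 + (INR (n - j) * theta + phi) / 2
                               - (INR n * theta + phi) / 2).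
      2:{ rewrite minus_INR by exact Hj. field. }
      apply sin3sq. }
  rewrite (sum_lt_ext L _ (fun j => (1 - r)^2 + 4 * r * g j)).
  2:{ intros j _. rewrite term_eq. reflexivity. }
  rewrite sum_lt_plus, sum_lt_const, sum_lt_scal, term_eq.
  fold s2.
  assert (HLp : 0 < INR L) by (apply lt_0_INR; exact HL).
  apply Rle_ge.
  replace (12 / INR L * (INR L * (1 - r) ^ 2 + 4 * r * sum_lt L g))
    with (12 * (1 - r)^2 + 4 * r * (12 * sum_lt L g) / INR L) by (field; lra).
  assert (s2 <= 12 * sum_lt L g / INR L).
  { apply Rmult_le_reg_r with (INR L); [lra|]. unfold Rdiv. rewrite Rmult_assoc, Rinv_l by lra. lra. }
  assert (4 * r * (12 * sum_lt L g) / INR L = 4 * r * (12 * sum_lt L g / INR L)) by (field; lra).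
  rewrite H0. pose proof (pow2_ge_0 (1 - r)). nra.
Qed.
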